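(* Let $H$ be a monoid in $\mathcal{C}_d$ with $d \ge 3$. If the convex cone generated by $H$ in the $\mathbb{Q}$-vector space $\mathbb{Q}\otimes_{\mathbb{Z}}\mathrm{gp}(H)$ is polyhedral, then the elasticity $\rho(H)$ is either a rational number or $\infty$.
   Context: Monoids are commutative, cancellative, reduced. $\mathrm{gp}(H)$ is the Grothendieck group of $H$; $\mathcal{C}_d$ is the collection of all rank-$d$ submonoids of free commutative monoids of finite rank (rank = rank of $\mathrm{gp}(H)$); such monoids are atomic. The cone generated by $H$ is the set of all finite nonnegative rational linear combinations of elements of $H$; a convex cone is polyhedral if it has only finitely many faces (equivalently, is finitely generated as a cone). For nonzero $x\in H$, $\mathsf{L}(x)$ is the set of all $n$ such that $x$ is a sum of $n$ atoms, $\rho(x)=\sup\mathsf{L}(x)/\inf\mathsf{L}(x)$, and $\rho(H)=\sup\{\rho(x)\mid x\in H\setminus\{0\}\}$. *)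

(* Defs.v *)
From HB Require Import structures.
From mathcomp Require Import all_boot all_order all_algebra.
From mathcomp Require Import boolp classical_sets reals constructive_ereal ereal.

Set Implicit Arguments.
Unset Strict Implicit.
Unset Printing Implicit Defensive.

Import Order.TTheory GRing.Theory Num.Theory.
Local Open Scope classical_set_scope.
Local Open Scope ring_scope.

Definition vzero (n : nat) : {ffun 'I_n -> nat} := [ffun => 0%N].
Definition vadd (n : nat) (a b : {ffun 'I_n -> nat}) : {ffun 'I_n -> nat} :=
  [ffun i => (a i + b i)%N].
Definition vsum (n : nat) (s : seq {ffun 'I_n -> nat}) : {ffun 'I_n -> nat} :=
  foldr (@vadd n) (vzero n) s.

Definition submonoid (n : nat) (H : set {ffun 'I_n -> nat}) : Prop :=
  H (vzero n) /\ (forall a b, H a -> H b -> H (vadd a b)).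

Definition atom (n : nat) (H : set {ffun 'I_n -> nat}) (x : {ffun 'I_n -> nat}) : Prop :=
  H x /\ x <> vzero n /\
  (forall a b, H a -> H b -> x = vadd a b -> a = vzero n \/ b = vzero n).

Definition lengths (n : nat) (H : set {ffun 'I_n -> nat}) (x : {ffun 'I_n -> nat}) : set nat :=
  [set k | exists s : seq {ffun 'I_n -> nat},
      size s = k /\ (forall a, a \in s -> atom H a) /\ vsum s = x].

Definition elast_elt (R : realType) (n : nat) (H : set {ffun 'I_n -> nat})
    (x : {ffun 'I_n -> nat}) : R :=
  sup [set (k%:R : R) | k in lengths H x] / inf [set (k%:R : R) | k in lengths H x].

Definition elasticity (R : realType) (n : nat) (H : set {ffun 'I_n -> nat}) : \bar R :=
  ereal_sup [set (elast_elt R H x)%:E | x in [set y | H y /\ y <> vzero n]].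

Definition embed (n : nat) (a : {ffun 'I_n -> nat}) : 'rV[rat]_n :=
  \row_i ((a i)%:R : rat).

(** gp(H), realized inside Q^n as the set of differences of elements of H. *)
Definition gp (n : nat) (H : set {ffun 'I_n -> nat}) : set 'rV[rat]_n :=
  [set embed a - embed b | a in H & b in H].

(** rank of gp(H) = maximal number of (Z-, equivalently Q-) linearly
    independent elements of gp(H). *)
Definition gp_rank_is (n : nat) (H : set {ffun 'I_n -> nat}) (d : nat) : Prop :=
  (exists s : seq 'rV[rat]_n, size s = d /\ (forall v, v \in s -> gp H v) /\ free s) /\
  (forall s : seq 'rV[rat]_n, (forall v, v \in s -> gp H v) -> free s -> (size s <= d)%N).

Definition conic_hull (n : nat) (S : set 'rV[rat]_n) : set 'rV[rat]_n :=
  [set v | exists (k : nat) (c : 'I_k -> rat) (g : 'I_k -> 'rV[rat]_n),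
      (forall i, 0 <= c i /\ S (g i)) /\ v = \sum_(i < k) c i *: g i].

(** The cone generated by H in Q (x) gp(H) = Q-span of H in Q^n. *)
Definition cone_of (n : nat) (H : set {ffun 'I_n -> nat}) : set 'rV[rat]_n :=
  conic_hull (@embed n @` H).

(** A convex cone is polyhedral iff it is finitely generated as a cone. *)
Definition polyhedral (n : nat) (C : set 'rV[rat]_n) : Prop :=
  exists g : seq 'rV[rat]_n, C = conic_hull [set v | v \in g].

(* Main.v *)
Require Import Defs.
From HB Require Import structures.
From mathcomp Require Import all_boot all_order all_algebra.
From mathcomp Require Import boolp classical_sets reals constructive_ereal ereal.
From mathcomp Require Import zify ring lra.
Set Implicit Arguments.
Unset Strict Implicit.
Unset Printing Implicit Defensive.
Import Order.TTheory GRing.Theory Num.Theory.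

Module MA.

Section Basics.
Variable n : nat.
Implicit Types (a b z : {ffun 'I_n -> nat}) (s : seq {ffun 'I_n -> nat}).

Definition nrm a : nat := (\sum_i a i)%N.

Lemma vsumE s i : vsum s i = (\sum_(a <- s) a i)%N.
Proof. elim: s => [|a s IH]; first by rewrite /= ffunE big_nil.
by rewrite /= ffunE big_cons IH. Qed.

Lemma vsum_cat s1 s2 : vsum (s1 ++ s2) = vadd (vsum s1) (vsum s2).
Proof. by apply/ffunP => i; rewrite ffunE !vsumE big_cat. Qed.

Lemma vadd0 a : vadd (vzero n) a = a.
Proof. by apply/ffunP => i; rewrite !ffunE. Qed.

Lemma nrm_vadd a b : nrm (vadd a b) = (nrm a + nrm b)%N.
Proof. by rewrite /nrm -big_split; apply: eq_bigr => i _; rewrite ffunE. Qed.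

Lemma nrm_vsum s : nrm (vsum s) = (\sum_(a <- s) nrm a)%N.
Proof. elim: s => [|a s IH]; first by rewrite big_nil /nrm big1 // => i _; rewrite ffunE.
by rewrite big_cons /= nrm_vadd IH. Qed.

Lemma nrm0 a : nrm a = 0%N -> a = vzero n.
Proof. move=> /eqP; rewrite /nrm sum_nat_eq0 => /forallP h.
by apply/ffunP => i; rewrite ffunE; apply/eqP; have := h i. Qed.

Lemma nrm_vzero : nrm (vzero n) = 0%N.
Proof. by rewrite /nrm big1 // => i _; rewrite ffunE. Qed.

Variable H : set {ffun 'I_n -> nat}.
Hypothesis sH : submonoid H.

Lemma H_vsum s : (forall a, a \in s -> H a) -> H (vsum s).
Proof. elim: s => [|a s IH] hs /=; first exact: sH.1.
apply: sH.2; first by apply: hs; rewrite inE eqxx.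
by apply: IH => b bs; apply: hs; rewrite inE bs orbT. Qed.

Lemma atomic z : H z -> z <> vzero n ->
  exists s, (forall a, a \in s -> atom H a) /\ vsum s = z /\ (0 < size s)%N.
Proof.
move: {2}(nrm z) (leqnn (nrm z)) => m; elim: m z => [|m IH] z hm Hz z0.
  by case: z0; apply: nrm0; apply/eqP; rewrite -leqn0.
case: (pselect (atom H z)) => [az|naz].
  exists [:: z]; split; first by move=> a; rewrite inE => /eqP ->.
  by split => //; rewrite /= /vadd; apply/ffunP => i; rewrite !ffunE addn0.
have [a [b [Ha [Hb [zab [a0 b0]]]]]] : exists a b, H a /\ H b /\ z = vadd a b /\ a <> vzero n /\ b <> vzero n.
  apply: contrapT => hn; apply: naz; split => //; split => // a b Ha Hb zab.
  apply: contrapT => h; apply: hn; exists a, b; do 4!split => //.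
    by move=> a0; apply: h; left.
  by move=> b0; apply: h; right.
have na : nrm a != 0%N by apply/eqP => /nrm0.
have nb : nrm b != 0%N by apply/eqP => /nrm0.
have := hm; rewrite zab nrm_vadd => hm'.
have [sa [As [va _]]] := IH a ltac:(lia) Ha a0.
have [sb [Bs [vb _]]] := IH b ltac:(lia) Hb b0.
exists (sa ++ sb); split.
  by move=> c; rewrite mem_cat => /orP [] ?; [apply: As|apply: Bs].
split; first by rewrite vsum_cat va vb.
rewrite size_cat; case: sa As va {IH} => [|? ?] //= _ va.
by case: a0; rewrite -va.
Qed.
End Basics.

End MA.
Import MA.

Module MB.

Section Len.
Variable n : nat.
Variable H : set {ffun 'I_n -> nat}.
Hypothesis sH : submonoid H.
Implicit Types (a b z : {ffun 'I_n -> nat}) (s : seq {ffun 'I_n -> nat}).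

Lemma atom_nrm a : atom H a -> (0 < nrm a)%N.
Proof. move=> [_ [a0 _]]; rewrite lt0n; apply/eqP => /nrm0; exact: a0. Qed.

Lemma len_bound z k : lengths H z k -> (k <= nrm z)%N /\ (z <> vzero n -> 0 < k)%N.
Proof.
move=> [s [<- [As <-]]]; split.
  rewrite nrm_vsum; elim: s As => [|a s IH] As //=.
  rewrite big_cons; have := atom_nrm (As a (mem_head _ _)).
  have := IH (fun b bs => As b (mem_behead (s:=a::s) bs)); lia.
by case: s As => //= _.
Qed.

Variable R : realType.
Local Open Scope ring_scope.
Local Open Scope classical_set_scope.

Let S z := [set (k%:R : R) | k in lengths H z].

Lemma S_ub z : has_ubound (S z).
Proof. by exists (nrm z)%:R => _ [k hk <-]; rewrite ler_nat; case: (len_bound hk). Qed.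

Lemma S_lb z : has_lbound (S z).
Proof. by exists 0 => _ [k hk <-]; rewrite ler0n. Qed.

Lemma S_ge1 z : z <> vzero n -> lbound (S z) 1.
Proof. by move=> z0 _ [k hk <-]; rewrite ler1n; case: (len_bound hk) => _ /(_ z0). Qed.

Lemma elast_LB z k1 k2 : z <> vzero n -> lengths H z k1 -> lengths H z k2 ->
  k1%:R / k2%:R <= elast_elt R H z.
Proof.
move=> z0 h1 h2; rewrite /elast_elt -/(S z).
have s1 : k1%:R <= sup (S z) by apply: ub_le_sup; [exact: S_ub| exists k1].
have i2 : inf (S z) <= k2%:R by apply: ge_inf; [exact: S_lb| exists k2].
have i1 : 1 <= inf (S z) by apply: lb_le_inf; [exists k2%:R; exists k2|exact: S_ge1].
have k2p : 0 < k2%:R :> R by lra.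
rewrite ler_pdivrMr // mulrAC ler_pdivlMr; last by lra.
by apply: ler_pM => //; lra.
Qed.

Lemma elast_UB z r : H z -> z <> vzero n -> 0 <= r ->
  (forall k1 k2, lengths H z k1 -> lengths H z k2 -> k1%:R <= r * k2%:R) ->
  elast_elt R H z <= r.
Proof.
move=> Hz z0 r0 hr; rewrite /elast_elt -/(S z).
have [s [As [vs sp]]] := atomic Hz z0.
have ne : S z !=set0 by exists (size s)%:R; exists (size s) => //; exists s.
have i1 : 1 <= inf (S z) by apply: lb_le_inf => //; exact: S_ge1.
have sr : forall k2, lengths H z k2 -> sup (S z) <= r * k2%:R.
  by move=> k2 h2; apply: ge_sup => // _ [k1 h1 <-]; apply: hr.
have : sup (S z) <= r * inf (S z).
  have [r00|rp] := eqVneq r 0.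
    rewrite r00 in sr *.
    have l1 : lengths H z (size s).
      by exists s.

    by have := sr _ l1; rewrite !mul0r.
  have rp' : 0 < r by rewrite lt_def rp.
  rewrite mulrC -ler_pdivrMr //; apply: lb_le_inf => // _ [k hk <-].
  by rewrite ler_pdivrMr // mulrC; apply: sr.
by move=> h; rewrite ler_pdivrMr //; lra.
Qed.
End Len.

End MB.
Import MB.

Module MC.
Local Open Scope ring_scope.

Section Cone.
Variable n : nat.
Implicit Types (a b z : {ffun 'I_n -> nat}) (s : seq {ffun 'I_n -> nat}).

Lemma embed_vadd a b : embed (vadd a b) = embed a + embed b.
Proof. by apply/rowP => i; rewrite !mxE ffunE natrD. Qed.

Lemma embed_vzero : embed (vzero n) = 0.
Proof. by apply/rowP => i; rewrite !mxE ffunE. Qed.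

Lemma embed_cat s1 s2 : embed (vsum (s1 ++ s2)) = embed (vsum s1) + embed (vsum s2).
Proof. by rewrite vsum_cat embed_vadd. Qed.

Lemma embed_inj a b : embed a = embed b -> a = b.
Proof. move=> /rowP h; apply/ffunP => i; have := h i; rewrite !mxE.
by move/eqP; rewrite eqr_nat => /eqP. Qed.

Lemma embed_rep p s : embed (vsum (flatten (nseq p s))) = p%:R *: embed (vsum s).
Proof. elim: p => [|p IH]; first by rewrite /= embed_vzero scale0r.
by rewrite /= embed_cat IH mulrS scalerDl scale1r. Qed.

Lemma mem_rep p s x : x \in flatten (nseq p s) -> x \in s.
Proof. elim: p => [|p IH] //=; rewrite mem_cat => /orP [] //; exact: IH. Qed.

Lemma rat_frac (c : rat) : 0 <= c -> exists p q : nat, (0 < q)%N /\ c = p%:R / q%:R.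
Proof.
move=> c0; exists `|numq c|%N, `|denq c|%N; split; first by rewrite absz_gt0 denq_neq0.
by rewrite !natr_absz !ger0_norm ?numq_ge0 ?divq_num_den // ltW // denq_gt0.
Qed.

Variable H : set {ffun 'I_n -> nat}.

Definition PM (M : nat) (u : 'rV[rat]_n) := exists D : nat, (0 < D)%N /\ exists s,
  (forall h, h \in s -> H h /\ h <> vzero n /\ (nrm h <= M)%N) /\ D%:R *: u = embed (vsum s).

Lemma PM0 M : PM M 0.
Proof. by exists 1%N; split => //; exists [::]; split => //=; rewrite embed_vzero scaler0. Qed.

Lemma PM_base M h : H h -> (nrm h <= M)%N -> PM M (embed h).
Proof.
move=> Hh hM; have [->|h0] := eqVneq h (vzero n); first by rewrite embed_vzero; exact: PM0.
exists 1%N; split => //; exists [:: h]; split; first by move=> x; rewrite inE => /eqP ->; do !split => //; apply/eqP.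
by rewrite scale1r /= embed_vadd embed_vzero addr0.
Qed.

Lemma PM_mono M M' u : (M <= M')%N -> PM M u -> PM M' u.
Proof.
move=> MM [D [D0 [s [hs e]]]]; exists D; split => //; exists s; split => // h /hs [? [? ?]].
by do !split => //; apply: leq_trans MM.
Qed.

Lemma PM_scale M c u : 0 <= c -> PM M u -> PM M (c *: u).
Proof.
move=> /rat_frac [p [q [q0 ->]]] [D [D0 [s [hs e]]]].
exists (D * q)%N; split; first by rewrite muln_gt0 D0.
exists (flatten (nseq p s)); split; first by move=> h /mem_rep; exact: hs.
rewrite embed_rep -e scalerA scalerA; congr (_ *: _).
have q0' : q%:R != 0 :> rat by rewrite pnatr_eq0 -lt0n.
by rewrite natrM; field.
Qed.

Lemma PM_add M u v : PM M u -> PM M v -> PM M (u + v).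
Proof.
move=> [D1 [D10 [s1 [h1 e1]]]] [D2 [D20 [s2 [h2 e2]]]].
exists (D1 * D2)%N; split; first by rewrite muln_gt0 D10.
exists (flatten (nseq D2 s1) ++ flatten (nseq D1 s2)); split.
  by move=> h; rewrite mem_cat => /orP [] /mem_rep; [exact: h1|exact: h2].
rewrite embed_cat !embed_rep -e1 -e2 !scalerA scalerDr natrM; congr (_ *: _ + _ *: _).
  by rewrite mulrC.
Qed.

Lemma PM_sum M k (c : 'I_k -> rat) (g : 'I_k -> 'rV[rat]_n) :
  (forall i, 0 <= c i) -> (forall i, PM M (g i)) -> PM M (\sum_(i < k) c i *: g i).
Proof.
move=> hc hg; apply: (big_ind (PM M)); [exact: PM0|exact: PM_add|].
by move=> i _; apply: PM_scale.
Qed.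

Lemma in_hull1 (S : set 'rV[rat]_n) v : S v -> conic_hull S v.
Proof.
move=> Sv; exists 1%N, (fun _ => 1), (fun _ => v); split => //.
by rewrite big_ord1 scale1r.
Qed.

Lemma PM_cone : polyhedral (cone_of H) ->
  exists M, (0 < M)%N /\ forall a, H a -> PM M (embed a).
Proof.
move=> [g hg].
have hv : forall v, v \in g -> exists M, PM M v.
  move=> v vg; have : cone_of H v by rewrite hg; apply: in_hull1.
  move=> [k [c [g' [hcg ->]]]].
  have : forall i : 'I_k, exists h, H h /\ embed h = g' i.
    by move=> i; have [_ [h Hh <-]] := hcg i; exists h.
  move=> /choice [f hf].
  exists (\max_(i < k) nrm (f i))%N; apply: PM_sum => i; first by case: (hcg i).
  by case: (hf i) => Hf <-; apply: PM_base => //; apply: leq_bigmax.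
have [M0 hM0] : exists M, forall v, v \in g -> PM M v.
  elim: g {hg} hv => [|v g IH] hv; first by exists 0%N.
  have [M1 h1] := hv v (mem_head _ _).
  have [M2 h2] := IH (fun w wg => hv w (mem_behead (s:=v::g) wg)).
  exists (maxn M1 M2) => w; rewrite inE => /orP [/eqP ->|wg].
    by apply: PM_mono h1; apply: leq_maxl.
  by apply: PM_mono (h2 w wg); apply: leq_maxr.
exists (maxn 1 M0); split; first by rewrite leq_maxl.
move=> a Ha; have : cone_of H (embed a) by apply: in_hull1; exists a.
rewrite hg => -[k [c [g' [hcg ->]]]]; apply: PM_sum => i; first by case: (hcg i).
by apply: PM_mono (hM0 _ (hcg i).2); apply: leq_maxr.
Qed.
End Cone.

End MC.
Import MC.

Module MD.
Local Open Scope ring_scope.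

Section Inf.
Variable n : nat.
Variable H : set {ffun 'I_n -> nat}.
Hypothesis sH : submonoid H.
Implicit Types (a b z : {ffun 'I_n -> nat}) (s : seq {ffun 'I_n -> nat}).

Lemma nrm_nseq D a : nrm (vsum (nseq D a)) = (D * nrm a)%N.
Proof. elim: D => [|D IH] /=; first by rewrite nrm_vzero. by rewrite nrm_vadd IH mulSn. Qed.

Lemma embed_nseq D a : embed (vsum (nseq D a)) = D%:R *: embed a.
Proof. elim: D => [|D IH] /=; first by rewrite embed_vzero scale0r.
by rewrite embed_vadd IH mulrS scalerDl scale1r. Qed.

Lemma refine s : (forall h, h \in s -> H h /\ h <> vzero n) ->
  exists s', (forall a, a \in s' -> atom H a) /\ vsum s' = vsum s /\ (size s <= size s')%N.
Proof.
elim: s => [|h s IH] hs; first by exists [::].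
have [Hh h0] := hs h (mem_head _ _).
have [s1 [A1 [v1 z1]]] := atomic Hh h0.
have [s2 [A2 [v2 z2]]] := IH (fun x xs => hs x (mem_behead (s:=h::s) xs)).
exists (s1 ++ s2); split.
  by move=> c; rewrite mem_cat => /orP [] ?; [apply: A1|apply: A2].
by rewrite vsum_cat v1 v2 size_cat /=; split => //; lia.
Qed.

Lemma nrm_le M s : (forall h, h \in s -> (nrm h <= M)%N) -> (nrm (vsum s) <= M * size s)%N.
Proof.
elim: s => [|h s IH] hs /=; first by rewrite nrm_vzero.
rewrite nrm_vadd mulnS; apply: leq_add; first exact: hs (mem_head _ _).
by apply: IH => x xs; apply: hs; rewrite inE xs orbT.
Qed.

Variable R : realType.

Lemma big_atom M a : (0 < M)%N -> (forall b, H b -> PM H M (embed b)) -> atom H a ->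
  exists z, H z /\ z <> vzero n /\ (nrm a)%:R / M%:R <= elast_elt R H z.
Proof.
move=> M0 hPM aa; have [Ha [a0 _]] := aa.
have [D [D0 [s [hs e]]]] := hPM a Ha.
set z := vsum (nseq D a).
have zs : z = vsum s by apply: embed_inj; rewrite embed_nseq e.
have Hz : H z by apply: (H_vsum sH) => x /nseqP [->].
have na := atom_nrm aa.
have z0 : z <> vzero n.
  by move=> zz; have := nrm_nseq D a; rewrite -/z zz nrm_vzero; lia.
exists z; split => //; split => //.
have [s' [As' [vs' ss']]] := refine (fun h hh => let: conj x (conj y _) := hs h hh in conj x y).
have l1 : lengths H z (size s') by exists s'; rewrite vs' zs.
have l2 : lengths H z D.
  by exists (nseq D a); rewrite size_nseq; split => //; split => // x /nseqP [->].
apply: le_trans (elast_LB R z0 l1 l2).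
have hle : (nrm a * D <= M * size s')%N.
  have := nrm_le (fun h hh => (hs h hh).2.2); rewrite -zs /z nrm_nseq.
  move=> h; rewrite mulnC; apply: leq_trans h _; rewrite leq_mul2l ss' orbT //.
have Mp : 0 < M%:R :> R by rewrite ltr0n.
have Dp : 0 < D%:R :> R by rewrite ltr0n.
rewrite ler_pdivrMr // mulrAC ler_pdivlMr // -!natrM ler_nat; lia.
Qed.

Lemma esup_pinfty (S : set (\bar R)) : (forall r : R, exists x, S x /\ (r%:E < x)%E) ->
  ereal_sup S = +oo%E.
Proof.
move=> h; case e: (ereal_sup S) => [r| |] //.
  have [x [Sx rx]] := h r; have := ereal_sup_ubound Sx; rewrite e => xr.
  by have := lt_le_trans rx xr; rewrite ltxx.
have [x [Sx rx]] := h 0; have := ereal_sup_ubound Sx; rewrite e => xr.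
by have := lt_le_trans rx xr; rewrite ltNge leNye.
Qed.

Lemma inf_case : polyhedral (cone_of H) ->
  (forall B, exists a, atom H a /\ (B < nrm a)%N) -> elasticity R H = +oo%E.
Proof.
move=> /PM_cone [M [M0 hPM]] hB; apply: esup_pinfty => r.
have [a [aa Ba]] := hB (Num.Def.trunc (r * M%:R)).
have [z [Hz [z0 hz]]] := big_atom M0 hPM aa.
exists (elast_elt R H z)%:E; split; first by exists z.
rewrite lte_fin; apply: lt_le_trans hz.
have Mp : 0 < M%:R :> R by rewrite ltr0n.
rewrite ltr_pdivlMr //; apply: lt_le_trans (truncnS_gt _) _.
by rewrite ler_nat.
Qed.
End Inf.

End MD.
Import MD.

Module ME.

Definition smono (f : nat -> nat) := forall k l, (k < l)%N -> (f k < f l)%N.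

Lemma smonoS f : (forall k, f k < f k.+1)%N -> smono f.
Proof.
move=> h k l; elim: l => [|l IH] //; rewrite ltnS leq_eqVlt => /orP [/eqP ->|kl].
  exact: h.
by apply: ltn_trans (IH kl) (h l).
Qed.

Lemma smono_le f : smono f -> forall k l, (k <= l)%N -> (f k <= f l)%N.
Proof. move=> h k l; rewrite leq_eqVlt => /orP [/eqP ->//|kl]; exact: ltnW (h _ _ kl). Qed.

Lemma exmin (g : nat -> nat) i : exists j, (i <= j)%N /\ forall l, (i <= l)%N -> (g j <= g l)%N.
Proof.
apply: contrapT => hn.
have hd : forall j, (i <= j)%N -> exists l, (i <= l)%N /\ (g l < g j)%N.
  move=> j ij; apply: contrapT => hl; apply: hn; exists j; split => // l il.
  by rewrite leqNgt; apply/negP => glj; apply: hl; exists l.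
suff : forall v j, (i <= j)%N -> (g j <= v)%N -> False by move/(_ (g i) i (leqnn i) (leqnn _)).
elim=> [|v IH] j ij gj.
  by have [l [_ hl]] := hd j ij; lia.
have [l [il hl]] := hd j ij; apply: (IH l il); lia.
Qed.

Lemma dickson1 (g : nat -> nat) : exists psi, smono psi /\
  forall k l, (k <= l)%N -> (g (psi k) <= g (psi l))%N.
Proof.
have [sel hsel] := choice (exmin g).
pose base k := if k is k'.+1 then (iter k' (fun p => sel p.+1) (sel 0)).+1 else 0%N.
pose psi k := iter k (fun p => sel p.+1) (sel 0).
have psiE : forall k, psi k = sel (base k) by case.
have hb : forall k, (base k <= psi k)%N by move=> k; rewrite psiE; case: (hsel (base k)).
exists psi; split.
  apply: smonoS => k; have := hb k.+1; by rewrite /base /psi /=.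
move=> k l kl; rewrite (psiE k); apply: (hsel (base k)).2.
have : (psi k <= psi l)%N.
  apply: smono_le kl; apply: smonoS => k'; have := hb k'.+1; by rewrite /base /psi /=.
by have := hb k; lia.
Qed.

Lemma dickson_seq (I : eqType) (F : nat -> I -> nat) (cs : seq I) : exists phi, smono phi /\
  forall c, c \in cs -> forall k l, (k <= l)%N -> (F (phi k) c <= F (phi l) c)%N.
Proof.
elim: cs => [|c cs [phi [sphi hphi]]]; first by exists id; split => // k l.
have [psi [spsi hpsi]] := dickson1 (fun k => F (phi k) c).
exists (phi \o psi); split; first by move=> k l kl; apply: sphi; apply: spsi.
move=> c'; rewrite inE => /orP [/eqP ->|cc] k l kl; first exact: hpsi.
by apply: hphi => //; apply: smono_le.
Qed.

Lemma dickson (I : finType) (F : nat -> I -> nat) : exists i j, (i < j)%N /\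
  forall c, (F i c <= F j c)%N.
Proof.
have [phi [sphi hphi]] := dickson_seq F (enum I).
exists (phi 0%N), (phi 1%N); split; first exact: sphi.
by move=> c; apply: hphi => //; rewrite mem_enum.
Qed.

End ME.
Import ME.

Module MF.

Section Rel.
Variable n : nat.
Variable H : set {ffun 'I_n -> nat}.
Hypothesis sH : submonoid H.
Variable B : nat.
Hypothesis hB : forall a, atom H a -> (nrm a <= B)%N.
Implicit Types (a b z : {ffun 'I_n -> nat}) (s : seq {ffun 'I_n -> nat}).

Definition TT := {ffun 'I_n -> 'I_B.+1}.
Definition io (t : TT) : {ffun 'I_n -> nat} := [ffun i => nat_of_ord (t i)].
Definition tof a : TT := [ffun i => inord (a i)].

Lemma io_inj : injective io.
Proof. move=> t t' /ffunP h; apply/ffunP => i; have := h i; rewrite !ffunE; exact: val_inj. Qed.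

Lemma io_tof a : atom H a -> io (tof a) = a.
Proof.
move=> aa; apply/ffunP => i; rewrite !ffunE inordK // ltnS.
apply: leq_trans (hB aa); rewrite /nrm (bigD1 i) //=; exact: leq_addr.
Qed.

Definition cvec := TT -> nat.
Definition cval (x : cvec) : {ffun 'I_n -> nat} := [ffun i => (\sum_t x t * io t i)%N].
Definition sz (x : cvec) : nat := (\sum_t x t)%N.
Definition supp (x : cvec) := forall t, (0 < x t)%N -> atom H (io t).

Definition cnt s : cvec := fun t => count_mem (io t) s.
Definition seqof (x : cvec) := flatten [seq nseq (x t) (io t) | t <- enum TT].

Lemma sum_delta a (F : {ffun 'I_n -> nat} -> nat) : atom H a ->
  (\sum_t (a == io t) * F (io t) = F a)%N.
Proof.
move=> aa; rewrite (bigD1 (tof a)) //= io_tof // eqxx mul1n big1 ?addn0 // => t tt.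
case: eqP => // e; have : io t = io (tof a) by rewrite io_tof.
by move/io_inj => e'; rewrite e' eqxx in tt.
Qed.

Lemma cnt_cons a s t : cnt (a :: s) t = ((a == io t) + cnt s t)%N.
Proof. by rewrite /cnt /= eq_sym. Qed.

Lemma cnt_val s : (forall a, a \in s -> atom H a) -> cval (cnt s) = vsum s.
Proof.
move=> As; apply/ffunP => i; rewrite ffunE vsumE.
elim: s As => [|a s IH] As.
  by rewrite big_nil big1 // => t _; rewrite /cnt /=.
rewrite (eq_bigr (fun t => (a == io t) * io t i + cnt s t * io t i)%N); last first.
  by move=> t _; rewrite cnt_cons mulnDl.
rewrite big_split /= (sum_delta (fun b => b i)) //; last exact: As (mem_head _ _).
by rewrite big_cons IH // => b bs; apply: As; rewrite inE bs orbT.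
Qed.

Lemma cnt_sz s : (forall a, a \in s -> atom H a) -> sz (cnt s) = size s.
Proof.
elim: s => [|a s IH] As; first by rewrite /sz big1.
rewrite /sz (eq_bigr (fun t => (a == io t) * 1 + cnt s t)%N); last first.
  by move=> t _; rewrite cnt_cons muln1.
rewrite big_split /= (sum_delta (fun _ => 1%N)) //; last exact: As (mem_head _ _).
by rewrite -/(sz (cnt s)) IH // => b bs; apply: As; rewrite inE bs orbT.
Qed.

Lemma cnt_supp s : (forall a, a \in s -> atom H a) -> supp (cnt s).
Proof. move=> As t; rewrite /cnt -has_count => /hasP [a ins /eqP <-]; exact: As. Qed.

Lemma seqof_mem x a : supp x -> a \in seqof x -> atom H a.
Proof.
move=> sx /flattenP [s' /mapP [t _ ->]] /nseqP [-> xt]; exact: sx.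
Qed.

Lemma seqof_val x : vsum (seqof x) = cval x.
Proof.
apply/ffunP => i; rewrite vsumE ffunE big_flatten big_map big_enum /=.
by apply: eq_bigr => t _; rewrite big_nseq iter_addn_0 mulnC.
Qed.

Lemma seqof_size x : size (seqof x) = sz x.
Proof.
rewrite -sum1_size big_flatten big_map big_enum /=.
by apply: eq_bigr => t _; rewrite big_nseq iter_addn_0 mul1n.
Qed.

Lemma val0 x : supp x -> cval x = vzero n -> forall t, x t = 0%N.
Proof.
move=> sx v0 t; apply/eqP; rewrite -leqn0 leqNgt; apply/negP => xt.
have [_ [a0 _]] := sx t xt; apply: a0; apply/ffunP => i.
have : (io t i == 0)%N.
  have /ffunP /(_ i) := v0; rewrite !ffunE => /eqP; rewrite sum_nat_eq0 => /forallP /(_ t) /=.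
  rewrite muln_eq0 => /orP [/eqP xt0|h].
    by rewrite xt0 in xt.
  by move: h; rewrite ffunE.
rewrite ffunE => /eqP ->; by rewrite ffunE.
Qed.

Lemma sz0 x : sz x = 0%N -> forall t, x t = 0%N.
Proof. by move=> /eqP; rewrite /sz sum_nat_eq0 => /forallP h t; apply/eqP; apply: h. Qed.

Lemma val_zero x : (forall t, x t = 0%N) -> cval x = vzero n.
Proof. by move=> h; apply/ffunP => i; rewrite !ffunE big1 // => t _; rewrite h. Qed.

Definition rrel (r : cvec * cvec) :=
  supp r.1 /\ supp r.2 /\ cval r.1 = cval r.2 /\ (0 < sz r.2)%N.

Definition rle (r r' : cvec * cvec) := forall t, (r.1 t <= r'.1 t)%N /\ (r.2 t <= r'.2 t)%N.

Definition rminimal r := rrel r /\ forall r', rrel r' -> rle r' r -> rle r r'.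

Lemma rel_val0 r : rrel r -> cval r.1 <> vzero n.
Proof.
move=> [s1 [s2 [e p]]] v0; rewrite e in v0; have := val0 s2 v0.
by move=> h; move: p; rewrite /sz big1 // => t _; rewrite h.
Qed.

Lemma rel_sz1 r : rrel r -> (0 < sz r.1)%N.
Proof. move=> hr; rewrite lt0n; apply/eqP => /sz0 /val_zero; exact: rel_val0. Qed.

Definition rsub (r r' : cvec * cvec) : cvec * cvec :=
  (fun t => r.1 t - r'.1 t, fun t => r.2 t - r'.2 t)%N.

Lemma sz_sub (x x' : cvec) : (forall t, x' t <= x t)%N -> sz x = (sz (fun t => x t - x' t) + sz x')%N.
Proof. by move=> h; rewrite /sz -big_split; apply: eq_bigr => t _ /=; rewrite subnK. Qed.

Lemma val_sub (x x' : cvec) i : (forall t, x' t <= x t)%N ->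
  cval x i = (cval (fun t => x t - x' t) i + cval x' i)%N.
Proof.
move=> h; rewrite !ffunE -big_split; apply: eq_bigr => t _ /=.
by rewrite -mulnDl subnK.
Qed.

Lemma rel_sub r r' : rrel r -> rrel r' -> rle r' r -> ~ rle r r' ->
  rrel (rsub r r') /\ (sz r.1 = sz (rsub r r').1 + sz r'.1)%N /\
  (sz r.2 = sz (rsub r r').2 + sz r'.2)%N.
Proof.
move=> [sx [sy [e py]]] [sx' [sy' [e' py']]] hle nle.
have h1 : forall t, (r'.1 t <= r.1 t)%N by move=> t; case: (hle t).
have h2 : forall t, (r'.2 t <= r.2 t)%N by move=> t; case: (hle t).
have sp1 : supp (rsub r r').1 by move=> t /= p; apply: sx; lia.
have sp2 : supp (rsub r r').2 by move=> t /= p; apply: sy; lia.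
have ev : cval (rsub r r').1 = cval (rsub r r').2.
  apply/ffunP => i; have := val_sub i h1; have := val_sub i h2.
  rewrite e e' => -> /eqP; rewrite eqn_add2r => /eqP //.
split; last by split; apply: sz_sub.
do 3!split => //; rewrite lt0n; apply/eqP => z2; apply: nle => t.
have v1 : cval (rsub r r').1 = vzero n by rewrite ev; apply: val_zero; apply: sz0.
have := val0 sp1 v1 t; have := sz0 z2 t; have := hle t; rewrite /=; lia.
Qed.

Lemma nonmin r : rrel r -> ~ rminimal r -> exists r', rrel r' /\ rle r' r /\ ~ rle r r'.
Proof.
move=> hr nm; apply: contrapT => hn; apply: nm; split => // r' hr' rle'.
by apply: contrapT => nl; apply: hn; exists r'.
Qed.

Lemma min_below r : rrel r -> exists m, rminimal m /\ rle m r.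
Proof.
move: {2}(sz r.1 + sz r.2)%N (leqnn (sz r.1 + sz r.2)%N) => N.
elim: N r => [|N IH] r hN hr.
  by have := rel_sz1 hr; lia.
case: (pselect (rminimal r)) => [mr|nm]; first by exists r; split => // t.
have [r' [hr' [rle' nle']]] := nonmin hr nm.
have [hs [e1 e2]] := rel_sub hr hr' rle' nle'.
have := rel_sz1 hs; have := rel_sz1 hr'; have := hs.2.2.2 => p1 p2 p3.
have [m [mm lm]] := IH r' ltac:(lia) hr'.
exists m; split => // t; have := lm t; have := rle' t; lia.
Qed.

Definition rratio (r : cvec * cvec) : rat := ((sz r.1)%:R / (sz r.2)%:R)%R.

Lemma all_ok (rho : rat) : (forall m, rminimal m -> (sz m.1)%:R <= rho * (sz m.2)%:R)%R ->
  forall r, rrel r -> ((sz r.1)%:R <= rho * (sz r.2)%:R)%R.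
Proof.
move=> hm r; move: {2}(sz r.1 + sz r.2)%N (leqnn (sz r.1 + sz r.2)%N) => N.
elim: N r => [|N IH] r hN hr.
  by have := rel_sz1 hr; lia.
case: (pselect (rminimal r)) => [mr|nm]; first exact: hm.
have [r' [hr' [rle' nle']]] := nonmin hr nm.
have [hs [e1 e2]] := rel_sub hr hr' rle' nle'.
have := rel_sz1 hs; have := rel_sz1 hr'; have := hs.2.2.2 => p1 p2 p3.
have o1 := IH r' ltac:(lia) hr'.
have o2 := IH (rsub r r') ltac:(lia) hs.
rewrite e1 e2 !natrD mulrDr; exact: lerD.
Qed.

Lemma best_min r0 : rrel r0 -> exists ms, rminimal ms /\
  forall m, rminimal m -> (rratio m <= rratio ms)%R.
Proof.
move=> hr0; have [m0 [mm0 _]] := min_below hr0.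
apply: contrapT => hn.
have step : forall m, exists m', rminimal m -> rminimal m' /\ (rratio m < rratio m')%R.
  move=> m; case: (pselect (rminimal m)) => [mm|nm]; last by exists m.
  suff [m' [mm' lt']] : exists m', rminimal m' /\ (rratio m < rratio m')%R by exists m'.
  apply: contrapT => hn'; apply: hn; exists m; split => // m' mm'.
  by rewrite leNgt; apply/negP => lt'; apply: hn'; exists m'.
have [f hf] := choice step.
pose sq k := iter k f m0.
have msq : forall k, rminimal (sq k) by elim=> [|k IH] //=; case: (hf _ IH).
have inc : forall k l, (k < l)%N -> (rratio (sq k) < rratio (sq l))%R.
  move=> k l; elim: l => [|l IH] //; rewrite ltnS leq_eqVlt => /orP [/eqP ->|kl].
    by case: (hf _ (msq l)).
  by apply: lt_trans (IH kl) _; case: (hf _ (msq l)).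
pose F k (c : TT + TT) := match c with inl t => (sq k).1 t | inr t => (sq k).2 t end.
have [i [j [ij hij]]] := dickson F.
have lij : rle (sq i) (sq j) by move=> t; split; [exact: (hij (inl t))|exact: (hij (inr t))].
have lji := (msq j).2 _ (msq i).1 lij.
have e1 : sz (sq i).1 = sz (sq j).1.
  by apply/eqP; rewrite eqn_leq; apply/andP; split; apply: leq_sum => t _; [case: (lij t)|case: (lji t)].
have e2 : sz (sq i).2 = sz (sq j).2.
  by apply/eqP; rewrite eqn_leq; apply/andP; split; apply: leq_sum => t _; [case: (lij t)|case: (lji t)].
by have := inc _ _ ij; rewrite /rratio e1 e2 ltxx.
Qed.
End Rel.

End MF.
Import MF.

Module MG.
Local Open Scope ring_scope.

Lemma fin_case (R : realType) n (H : set {ffun 'I_n -> nat}) (B : nat) z0 :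
  submonoid H -> (forall a, atom H a -> (nrm a <= B)%N) -> H z0 -> z0 <> vzero n ->
  exists q : rat, elasticity R H = (ratr q : R)%:E.
Proof.
move=> sH hB Hz0 z00.
have [s0 [A0 [v0 p0]]] := atomic Hz0 z00.
have hr0 : @rrel n H B (cnt s0, cnt s0).
  rewrite /rrel; split; last split; last split => //; [exact: cnt_supp|exact: cnt_supp|].
  by rewrite /= (cnt_sz hB A0).
have [ms [mms hms]] := best_min hr0.
set rho := rratio ms.
have hall : forall r, @rrel n H B r -> (sz r.1)%:R <= rho * (sz r.2)%:R.
  apply: all_ok => m mm; have := hms m mm; rewrite /rratio.
  have p2 : 0 < (sz m.2)%:R :> rat by rewrite ltr0n; case: mm => [[_ [_ [_ ?]]] _].
  by rewrite ler_pdivrMr // => h; rewrite mulrC.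
have rho0 : 0 <= rho by rewrite /rho /rratio divr_ge0 // ler0n.
exists rho; apply/le_anti/andP; split.
  apply: ge_ereal_sup => _ [z [Hz zz0] <-]; rewrite lee_fin.
  have zz1 := zz0; apply: elast_UB Hz zz1 _ _; first by rewrite ler0q.
  move=> k1 k2 [s1 [<- [A1 v1]]] [s2 [<- [A2 v2]]].
  have hr : @rrel n H B (cnt s1, cnt s2).
    rewrite /rrel; split; last split; last split; [exact: cnt_supp|exact: cnt_supp| |].
      by rewrite /= (cnt_val hB A1) (cnt_val hB A2) v1 v2.
    rewrite /= (cnt_sz hB A2).
    have l2 : lengths H z (size s2) by exists s2.
    by case: (len_bound l2) => _ /(_ zz0).
  have := hall _ hr; rewrite /= (cnt_sz hB A1) (cnt_sz hB A2).
  by rewrite -(ler_rat R) rmorphM /= !ratr_nat.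
have [s1 [s2 [e p2]]] := mms.1.
set zs := cval ms.1.
have Hzs : H zs.
  rewrite /zs -seqof_val; apply: (H_vsum sH) => a; by move/(seqof_mem s1) => [].
have zs0 : zs <> vzero n by apply: rel_val0 mms.1.
have l1 : lengths H zs (sz ms.1).
  exists (seqof ms.1); rewrite seqof_size seqof_val; split => //; split => // a.
  exact: seqof_mem s1.
have l2 : lengths H zs (sz ms.2).
  exists (seqof ms.2); rewrite seqof_size seqof_val; split => //; split; last by rewrite /zs e.
  move=> a; exact: seqof_mem s2.
apply: le_trans (ereal_sup_ubound (ex_intro2 _ _ zs (conj Hzs zs0) erefl)).
rewrite lee_fin; apply: le_trans (elast_LB R zs0 l1 l2).
by rewrite /rho /rratio fmorph_div /= !ratr_nat.
Qed.


End MG.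
Import MG.

Theorem theorem5p8 (R : realType) (n d : nat) (H : set {ffun 'I_n -> nat}) :
  submonoid H ->
  gp_rank_is H d ->
  (3 <= d)%N ->
  polyhedral (cone_of H) ->
  elasticity R H = +oo%E \/ exists q : rat, elasticity R H = ((ratr q : R)%:E)%E.
Proof.
move=> sH [[s [sd [gs fs]]] _] d3 hp.
case: (pselect (exists B, forall a, atom H a -> (nrm a <= B)%N)) => [[B hB]|nB].
  right; case: s sd gs fs => [|v s] //=; first by move=> d0; rewrite -d0 in d3.
  move=> _ gs fs; have v0 := free_not0 fs (mem_head _ _).
  have [a Ha [b Hb e]] := gs v (mem_head _ _).
  case: (pselect (a = vzero n)) => [a0|a0]; last exact: fin_case hB Ha a0.
  case: (pselect (b = vzero n)) => [b0|b0]; last exact: fin_case hB Hb b0.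
  by move: v0; rewrite -e a0 b0 subrr eqxx.
left; apply: inf_case sH R hp _ => M; apply: contrapT => hn; apply: nB; exists M.
by move=> a aa; rewrite leqNgt; apply/negP => Ma; apply: hn; exists a.
Qed.
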